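(* Let $a,b$ be integers with $0<a<b$. Let $\Gamma_{a,b}=\{\gamma_1,\gamma_2,\gamma_3,\dots\}$ be the sequence produced by the greedy algorithm: $\gamma_1=a$, $\gamma_2=b$, and for $r\ge 3$, $\gamma_r$ is the smallest integer greater than $\gamma_{r-1}$ such that $\{\gamma_1,\dots,\gamma_r\}$ is dissociated. Then there is an integer $n_0=n_0(a,b)$ such that $\gamma_n = 2\gamma_{n-1}$ for all $n\ge n_0$.
   Context: A set $\mathcal S\subseteq\mathbb N$ is dissociated if all of its finite subsets have different sums; equivalently, any equality $\sum_{s\in\mathcal S}\varepsilon_s s=0$ with $\varepsilon_s\in\{-1,0,1\}$ and only finitely many $\varepsilon_s\neq 0$ forces all $\varepsilon_s=0$. *)

(* Defs.v *)
From mathcomp Require Import all_boot all_order all_algebra.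
Set Implicit Arguments. Unset Strict Implicit. Unset Printing Implicit Defensive.
Import GRing.Theory Num.Theory.
Local Open Scope ring_scope.

Definition dissociated_prefix (g : nat -> nat) (r : nat) : Prop :=
  forall eps : nat -> int,
    (forall i, (i < r)%N -> eps i \in [:: -1; 0; 1]) ->
    \sum_(i < r) eps i * (g i)%:Z = 0 ->
    forall i, (i < r)%N -> eps i = 0.

(* The greedy sequence Gamma_{a,b}, 0-indexed: g 0 = gamma_1 = a,
   g 1 = gamma_2 = b, and for r >= 2, g r is the smallest integer greater than
   g (r-1) such that {g 0, ..., g r} is dissociated. *)
Definition greedy_seq (a b : nat) (g : nat -> nat) : Prop :=
  g 0%N = a /\ g 1%N = b /\
  forall r : nat, (2 <= r)%N ->
    [/\ (g r.-1 < g r)%N,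
        dissociated_prefix g r.+1 &
        forall m : nat, (g r.-1 < m < g r)%N ->
          ~ dissociated_prefix (fun i => if i == r then m else g i) r.+1].

(* Main.v *)
Require Import Defs.
From mathcomp Require Import all_boot all_order all_algebra.
From mathcomp Require Import zify.
From Stdlib Require Import Classical.
Set Implicit Arguments. Unset Strict Implicit. Unset Printing Implicit Defensive.
Import Order.TTheory GRing.Theory Num.Theory.
Open Scope ring_scope.

Definition inD (g : nat -> nat) (r : nat) (x : int) : Prop :=
  exists eps : nat -> int, (forall i, (i < r)%N -> eps i \in [:: -1; 0; 1]) /\
    x = \sum_(i < r) eps i * (g i)%:Z.

Lemma ext_sum (g : nat -> nat) r (eps : nat -> int) (e : int) :
  \sum_(i < r.+1) (if (i < r)%N then eps i else e) * (g i)%:Z =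
  \sum_(i < r) eps i * (g i)%:Z + e * (g r)%:Z.
Proof.
rewrite big_ord_recr /= ltnn; congr (_ + _).
by apply: eq_bigr => i _; rewrite /= ltn_ord.
Qed.

Lemma inD_ext g r x e : inD g r x -> e \in [:: -1; 0; 1] ->
  inD g r.+1 (x + e * (g r)%:Z).
Proof.
move=> [eps [He ->]] Hee; exists (fun i => if (i < r)%N then eps i else e); split.
  by move=> i _; case: ifP => [hi|_]; [exact: He | exact: Hee].
by rewrite ext_sum.
Qed.

Lemma inD_mono g r x : inD g r x -> inD g r.+1 x.
Proof. by move=> H; have := inD_ext (e := 0) H; rewrite mul0r addr0; apply. Qed.

Lemma inD0 g r : inD g r 0.
Proof.
exists (fun _ => 0); split => //.
by rewrite big1 // => i _; rewrite mul0r.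
Qed.

Lemma inD_opp g r y : inD g r y -> inD g r (- y).
Proof.
move=> [eps [He ->]]; exists (fun i => - eps i); split.
  by move=> i hi; move: (He i hi); rewrite !inE; case/or3P => /eqP ->.
by rewrite -sumrN; apply: eq_bigr => i _; rewrite mulNr.
Qed.

Lemma inD_bound g r x : inD g r x -> `|x| <= \sum_(i < r) (g i)%:Z.
Proof.
move=> [eps [He ->]]; apply: (le_trans (ler_norm_sum _ _ _)).
apply: ler_sum => i _; rewrite normrM.
by move: (He i (ltn_ord i)); rewrite !inE; case/or3P => /eqP ->; rewrite ?normr0 ?mul0r ?normrN1 ?normr1 ?mul1r.
Qed.

Lemma dissoc_ext g r m : dissociated_prefix g r -> ~ inD g r m%:Z ->
  dissociated_prefix (fun i => if i == r then m else g i) r.+1.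
Proof.
move=> Hd HnD eps He.
rewrite big_ord_recr /= eqxx.
under eq_bigr => i _ do rewrite /= (ltn_eqF (ltn_ord i)).
move=> Hs.
have He' : forall i, (i < r)%N -> eps i \in [:: -1; 0; 1] by move=> i hi; exact: (He i (ltnW hi)).
have Her := He r (ltnSn r); rewrite !inE in Her; case/or3P: Her => /eqP Her.
- exfalso; apply: HnD; exists eps; split => //.
  by move: Hs; rewrite Her mulN1r => /eqP; rewrite subr_eq0 => /eqP <-.
- move: Hs; rewrite Her mul0r addr0 => Hs.
  have Hz := Hd eps He' Hs.
  move=> i; rewrite ltnS leq_eqVlt => /orP [/eqP -> // | hi]; exact: Hz.
- exfalso; apply: HnD.
  have := inD_opp (ex_intro _ eps (conj He' (erefl (\sum_(i < r) eps i * (g i)%:Z)))).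
  by move: Hs; rewrite Her mul1r => /eqP; rewrite addr_eq0 => /eqP ->; rewrite opprK.
Qed.

Lemma dissoc_notin g r : dissociated_prefix g r.+1 -> ~ inD g r (g r)%:Z.
Proof.
move=> Hd [eps [He Hx]].
pose eps' := fun i => if (i < r)%N then eps i else -1.
have Hm : forall i, (i < r.+1)%N -> eps' i \in [:: -1; 0; 1].
  by move=> i _; rewrite /eps'; case: ifP => [hi|_]; [exact: He | by []].
have Hs : \sum_(i < r.+1) eps' i * (g i)%:Z = 0.
  by rewrite /eps' ext_sum -Hx mulN1r subrr.
by have := Hd eps' Hm Hs r (ltnSn r); rewrite /eps' ltnn => /eqP.
Qed.

Lemma dissoc_down g r : dissociated_prefix g r.+1 -> dissociated_prefix g r.
Proof.
move=> Hd eps He Hs.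
pose eps' := fun i => if (i < r)%N then eps i else 0.
have Hm : forall i, (i < r.+1)%N -> eps' i \in [:: -1; 0; 1].
  by move=> i _; rewrite /eps'; case: ifP => [hi|_]; [exact: He | by []].
have Hs' : \sum_(i < r.+1) eps' i * (g i)%:Z = 0.
  by rewrite /eps' ext_sum Hs mul0r addr0.
move=> i hi; have := Hd eps' Hm Hs' i (ltnW hi).
by rewrite /eps' hi.
Qed.

Definition GH (g : nat -> nat) := forall r : nat, (2 <= r)%N ->
    [/\ (g r.-1 < g r)%N,
        dissociated_prefix g r.+1 &
        forall m : nat, (g r.-1 < m < g r)%N ->
          ~ dissociated_prefix (fun i => if i == r then m else g i) r.+1].

Definition Sn (g : nat -> nat) n := (\sum_(i < n) g i)%N.

Lemma Sn_int g n : (Sn g n)%:Z = \sum_(i < n) (g i)%:Z.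
Proof. by rewrite /Sn (big_morph Posz PoszD (erefl _)). Qed.

Lemma SnS g n : Sn g n.+1 = (Sn g n + g n)%N.
Proof. by rewrite /Sn big_ord_recr. Qed.

Section Main.
Variable g : nat -> nat.
Hypothesis Hg : GH g.

Lemma G_dissoc r : (2 <= r)%N -> dissociated_prefix g r.
Proof. by move=> h; have [_ H _] := Hg h; exact: dissoc_down. Qed.

Lemma G2 r : (2 <= r)%N -> ~ inD g r (g r)%:Z.
Proof. by move=> h; have [_ H _] := Hg h; exact: dissoc_notin. Qed.

Lemma G3 r m : (2 <= r)%N -> (g r.-1 < m < g r)%N -> inD g r m%:Z.
Proof.
move=> h hm; apply: NNPP => Hn; have [_ _ H] := Hg h.
by apply: (H m hm); apply: dissoc_ext => //; exact: G_dissoc.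
Qed.

Lemma G4 r : (2 <= r)%N -> (g r <= Sn g r + 1)%N.
Proof.
move=> h; rewrite leqNgt; apply/negP => Hlt.
have [_ _ H] := Hg h.
apply: (H (Sn g r).+1).
  apply/andP; split; last by lia.
  case: r h {H Hlt} => [//|r] _; rewrite SnS /=; lia.
apply: dissoc_ext; first exact: G_dissoc.
move/inD_bound; rewrite -Sn_int /= lez_nat; lia.
Qed.

Lemma hole_step r x : (2 <= r)%N -> (0 < x < g r.+1)%N -> ~ inD g r.+1 x%:Z ->
  [/\ (x < g r)%N, ~ inD g r x%:Z & ~ inD g r (g r - x)%N%:Z].
Proof.
move=> h hx hn.
have hxr : (x < g r)%N.
  rewrite ltnNge leq_eqVlt; apply/negP => /orP [/eqP Heq | Hlt].
    apply: hn; rewrite -Heq; have := inD_ext (e := 1) (inD0 g r).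
    by rewrite add0r mul1r; apply.
  by apply: hn; apply: G3 => //=; [lia | apply/andP; split; lia].
split => //; first by move=> H; apply: hn; exact: inD_mono.
move=> H; apply: hn; have := inD_ext (e := 1) (inD_opp H).
have -> : - Posz (g r - x)%N + 1 * Posz (g r) = Posz x by rewrite mul1r; lia.
by apply.
Qed.

Lemma hole_desc r x : (2 <= r)%N -> (0 < x)%N -> (x < g r)%N -> ~ inD g r x%:Z ->
  (x < g 2)%N.
Proof.
elim: r => [//|r IH] hr hx0 hxr hn.
case: (leqP 2 r) => h2.
  have [h1 h3 _] := hole_step h2 (introT andP (conj hx0 hxr)) hn.
  exact: IH.
have E : r.+1 = 2%N by lia.
by rewrite E in hxr.
Qed.

Lemma g_incr n : (g n < g n.+1)%N -> True.
Proof. by []. Qed.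

Definition Tight n := forall x : nat, (0 < x < g n)%N -> inD g n x%:Z.

Lemma tight_next n : (2 <= n)%N -> Tight n -> Tight n.+1.
Proof.
move=> h T x hx; apply: NNPP => hn.
have [hxr hnx _] := hole_step h hx hn.
by apply: hnx; apply: T; apply/andP; split; [case/andP: hx|].
Qed.

Lemma double_lb n : (2 <= n)%N -> Tight n -> (2 * g n <= g n.+1)%N.
Proof.
move=> h T; rewrite leqNgt; apply/negP => hlt.
have [h1 _ _] := Hg (r:=n.+1) (leqW h).
simpl in h1.
have hb : (0 < g n.+1 - g n < g n)%N by apply/andP; split; lia.
have H := T _ hb.
apply: (G2 (leqW h)); have := inD_ext (e := 1) H.
have -> : Posz (g n.+1 - g n)%N + 1 * Posz (g n) = Posz (g n.+1) by rewrite mul1r; lia.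
by apply.
Qed.

End Main.

Lemma evconst (f : nat -> nat) N : (forall n, (N <= n)%N -> (f n.+1 <= f n)%N) ->
  exists M, (N <= M)%N /\ forall n, (M <= n)%N -> f n = f M.
Proof.
move=> Hf.
suff : forall k N', (N <= N')%N -> (f N' <= k)%N -> exists M, (N <= M)%N /\ forall n, (M <= n)%N -> f n = f M.
  by move=> H; exact: (H (f N) N).
have mono : forall N', (N <= N')%N -> forall d, (f (N' + d) <= f N')%N.
  move=> N' hN; elim=> [|d IH]; first by rewrite addn0.
  rewrite addnS; apply: leq_trans (Hf _ _) IH; lia.
elim=> [|k IH] N' hN hk.
  exists N'; split => // n hn; have := mono N' hN (n - N')%N.
  rewrite subnKC //; lia.
case: (classic (forall n, (N' <= n)%N -> f n = f N')) => [H|H].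
  by exists N'.
have [n Hn] := not_all_ex_not _ _ H.
have [hn hne] := imply_to_and _ _ Hn.
apply: (IH n); first lia.
have := mono N' hN (n - N')%N; rewrite subnKC //; lia.
Qed.

Close Scope ring_scope.

Theorem theorem3 (a b : nat) (g : nat -> nat) :
  (0 < a)%N -> (a < b)%N -> greedy_seq a b g ->
  exists n0 : nat, forall n : nat, (n0 <= n)%N -> g n = (2 * g n.-1)%N.
Proof.
move=> ha hab [g0 [g1 Hg']].
have Hg : GH g := Hg'.
have incr : forall n, g n < g n.+1.
  case=> [|n]; first by rewrite g0 g1.
  by have [h _ _] := Hg n.+2 isT.
have ge : forall n, n <= g n.
  elim=> [//|n IH]; exact: leq_ltn_trans IH (incr n).
pose r := (2 * g 2 + 2)%N.
have hr2 : 2 <= r by rewrite /r; lia.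
have T0 : Tight g r.+1.
  move=> x hx; apply: NNPP => hn.
  have [hxr hnx hn2] := hole_step Hg hr2 hx hn.
  have hx0 : 0 < x by case/andP: hx.
  have A := hole_desc Hg hr2 hx0 hxr hnx.
  have B := hole_desc Hg hr2 (_ : 0 < g r - x) (_ : g r - x < g r) hn2.
  have := ge r; rewrite /r in A B *; move: A B; lia.
have Tall : forall k, Tight g (r.+1 + k).
  elim=> [|k IH]; first by rewrite addn0.
  by rewrite addnS; apply: tight_next => //; lia.
pose u n := (Sn g n + 1 - g n)%N.
have hu : forall n, r.+1 <= n -> u n.+1 <= u n.
  move=> n hn.
  have T : Tight g n by have := Tall (n - r.+1); rewrite subnKC.
  have D := double_lb Hg (_ : 2 <= n) T.
  have A := G4 Hg (_ : 2 <= n.+1).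
  have B := G4 Hg (_ : 2 <= n).
  rewrite /u SnS; rewrite SnS in A; lia.
have [M [hM HM]] := evconst hu.
exists M.+1 => -[|n] hn //=.
have T : Tight g n by have := Tall (n - r.+1); rewrite subnKC //; lia.
have D := double_lb Hg (_ : 2 <= n) T.
have A := G4 Hg (_ : 2 <= n.+1).
have B := G4 Hg (_ : 2 <= n).
have E1 := HM n.+1 (ltnW hn); have E2 := HM n hn.
rewrite /u SnS in E1 A; rewrite /u in E2.
lia.
Qed.
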